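(* For every hypothesis class $\mathcal{F}\subseteq\mathcal{Y}^{\mathcal{X}}$ (with $\mathcal{Y}$ finite), $\mathrm{DFFdim}(\mathrm{OtD}(\mathcal{F}))\geq\mathrm{Ldim}(\mathcal{F})$.
   Context: Setting. A teacher over $\mathcal{X},\mathcal{Y},\Phi$ ($\Phi$ a set of Boolean features on $\mathcal{X}$, $\bot$ a null symbol) is a pair $T=(\ell,\psi)$ with $\ell:\mathcal{X}\to\mathcal{Y}$ and $\psi:\mathcal{X}\times\mathcal{X}\to\Phi\cup\{\bot\}$ such that whenever $\ell(x)\neq\ell(\hat x)$, $\phi:=\psi(x,\hat x)\in\Phi$, $\phi(x)=1$ and $\phi(\hat x)=0$. A teacher class is a set of teachers. A history is a non-empty set $H\subseteq\mathcal{X}\times\mathcal{Y}$, $H_{\mathcal{X}}=\{x:\exists y,(x,y)\in H\}$; a teacher $(\ell,\psi)$ is consistent with $H$ if $\ell(x)=y$ for all $(x,y)\in H$; $\mathcal{T}_H$ is the set of teachers in $\mathcal{T}$ consistent with $H$. DFF dimension. A DFF tree is a rooted tree whose nodes are triples $\langle y,\phi,x\rangle$ with $y\in\mathcal{Y}\cup\{\bot\}$, $\phi\in\Phi\cup\{\bot\}$, $x\in\mathcal{X}\cup\{\bot\}$, such that the root has $y=\phi=\bot$, a node has $x=\bot$ iff it is a leaf, every edge is labeled by a pair $(\hat x,\hat y)\in\mathcal{X}\times\mathcal{Y}$, and every non-root node $\langle y,\phi,x\rangle$ with incoming edge $(\hat x,\hat y)$ has $\phi\neq\bot$ whenever $y\neq\hat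 y$. For a parent–child pair $\langle\cdot,\cdot,x\rangle\xrightarrow{(\hat x,\hat y)}\langle y,\phi,\cdot\rangle$ on a path, $(x,y)$ is called a labeled example in that path. A path from the root is consistent with a teacher $(\ell,\psi)$ if for every such parent–child pair on it, $\ell(x)=y$ and, if $y\neq\hat y$, $\psi(x,\hat x)=\phi$. Given $\mathcal{T}$ consistent with $H$, a DFF tree is shattered by $\mathcal{T}$ and $H$ if: (1) every non-root node $\langle y,\phi,x\rangle$ with incoming edge $(\hat x,\hat y)$ has $y\neq\hat y$; (2) the labels of the outgoing edges of each non-leaf node $v$ are exactly the pairs that belong to $H$ or are labeled examples in the path from the root to $v$; (3) every root-to-leaf path is consistent with some teacher in $\mathcal{T}_H$; (4) all root-to-leaf paths have the same number of edges, called the height. $\mathrm{DFFdim}(\mathcal{T},H)$ is the maximal height of a DFF tree shattered by $\mathcal{T}$ and $H$. $\mathrm{Ldim}$ is the (multiclass) Littlestone dimension: the maximal depth of a complete binary tree whose internal nodes are labeled by examples and whose two outgoing edges at each internal node are labeled by two distinct labels, such that for every root-to-leaf path some $f\in\mathcal{F}$ agrees with all (example, edge label) pairs on the path. Mapping OtD: given $\mathcal{F}\subseteq\mathcal{Y}^{\mathcal{X}}$, for each $y\in\mathcal{Y}$ let $\star_y\notin\mathcal{X}$ be a new distinct point, $H=\{(\star_y,y):y\in\mathcal{Y}\}$, $\mathcal{X}'=\mathcal{X}\cup H_{\mathcal{X}}$, and $\Phi=\{\mathbb{I}[x]:x\in\mathcal{X}'\}$ where $\mathbb{I}[x](x')=1$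 iff $x'=x$. For $f\in\mathcal{F}$ let $f':\mathcal{X}'\to\mathcal{Y}$ extend $f$ by $f'(\star_y)=y$, let $\psi_f(x,x')=\mathbb{I}[x]$, and $T_f=(f',\psi_f)$. Then $\mathrm{OtD}(\mathcal{F})=(\mathcal{T}_{\mathcal{F}},H)$ with $\mathcal{T}_{\mathcal{F}}=\{T_f:f\in\mathcal{F}\}$ (a teacher class over $\mathcal{X}',\mathcal{Y},\Phi$). *)

(* Defs.v *)
From mathcomp Require Import all_boot.
From Stdlib Require Lists.List.
Set Implicit Arguments.
Unset Strict Implicit.
Unset Printing Implicit Defensive.

Definition is_teacher (X Y Phi : Type) (ev : Phi -> X -> bool)
  (l : X -> Y) (psi : X -> X -> option Phi) : Prop :=
  forall x xh, l x <> l xh ->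
    exists phi, psi x xh = Some phi /\ ev phi x = true /\ ev phi xh = false.

Definition teacher_consistent_H (X Y : Type) (l : X -> Y) (H : list (X * Y)) : Prop :=
  forall x y, List.In (x, y) H -> l x = y.

(* DFF trees.  A node is <y, phi, x> (None = bottom) together with the *)
(* list of its outgoing edges, each labelled by a pair (xh, yh).       *)
Inductive dtree (X Y Phi : Type) : Type :=
  DNode : option Y -> option Phi -> option X ->
          list ((X * Y) * dtree X Y Phi) -> dtree X Y Phi.

Definition dy X Y Phi (t : dtree X Y Phi) : option Y :=
  let: DNode y _ _ _ := t in y.
Definition dphi X Y Phi (t : dtree X Y Phi) : option Phi :=
  let: DNode _ phi _ _ := t in phi.

Definition new_ex X Y (px : X) (oy : option Y) : list (X * Y) :=
  match oy with Some y => [:: (px, y)] | None => [::] end.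

(* Structural well-formedness of a DFF tree below a node, together with the
   shattering conditions (1) and (2).  [ex] is the list of labeled examples
   on the path from the root to the current node. *)
Inductive dff_ok (X Y Phi : Type) (H : list (X * Y))
  : list (X * Y) -> dtree X Y Phi -> Prop :=
| dff_ok_node ex y phi ox ch :
    (ox = None <-> ch = nil) ->
    (forall px, ox = Some px ->
       List.NoDup (map fst ch) /\
       (forall p, List.In p (map fst ch) <-> (List.In p H \/ List.In p ex)) /\
       (forall lab c, List.In (lab, c) ch ->
          (dy c <> Some lab.2 -> dphi c <> None) /\
          dy c <> Some lab.2 /\
          dff_ok H (ex ++ new_ex px (dy c)) c)) ->
    dff_ok H ex (DNode y phi ox ch).

(* Root-to-leaf paths: list of steps (parent x, edge label, child y, child phi). *)
Inductive dpath (X Y Phi : Type)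
  : dtree X Y Phi -> list (X * (X * Y) * option Y * option Phi) -> Prop :=
| dpath_leaf y phi ox : dpath (DNode y phi ox nil) nil
| dpath_step y phi px ch lab c p :
    List.In (lab, c) ch -> dpath c p ->
    dpath (DNode y phi (Some px) ch) ((px, lab, dy c, dphi c) :: p).

Definition path_consistent (X Y Phi : Type) (l : X -> Y)
  (psi : X -> X -> option Phi) (p : list (X * (X * Y) * option Y * option Phi)) : Prop :=
  forall px lab yc phic, List.In (px, lab, yc, phic) p ->
    yc = Some (l px) /\ (yc <> Some lab.2 -> psi px lab.1 = phic).

Definition dff_shattered (X Y Phi : Type)
  (TC : (X -> Y) -> (X -> X -> option Phi) -> Prop) (H : list (X * Y))
  (t : dtree X Y Phi) (h : nat) : Prop :=
  dy t = None /\ dphi t = None /\ dff_ok H nil t /\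
  (forall p, dpath t p ->
     exists l psi, TC l psi /\ teacher_consistent_H l H /\ path_consistent l psi p) /\
  (forall p, dpath t p -> size p = h).

Definition DFFdim_ge (X Y Phi : Type)
  (TC : (X -> Y) -> (X -> X -> option Phi) -> Prop) (H : list (X * Y)) (n : nat) : Prop :=
  exists t h, n <= h /\ dff_shattered TC H t h.

Inductive ltree (X Y : Type) : Type :=
| LLeaf : ltree X Y
| LNode : X -> Y -> Y -> ltree X Y -> ltree X Y -> ltree X Y.

Fixpoint lcomplete X Y (t : ltree X Y) (n : nat) : Prop :=
  match t, n with
  | LLeaf, 0 => True
  | LNode _ y0 y1 l r, S m => y0 <> y1 /\ lcomplete l m /\ lcomplete r m
  | _, _ => False
  end.

Fixpoint lpaths X Y (t : ltree X Y) : list (list (X * Y)) :=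
  match t with
  | LLeaf => [:: [::]]
  | LNode x y0 y1 l r =>
      map (cons (x, y0)) (lpaths l) ++ map (cons (x, y1)) (lpaths r)
  end.

Definition Ldim_ge (X Y : Type) (F : (X -> Y) -> Prop) (n : nat) : Prop :=
  exists t : ltree X Y, lcomplete t n /\
    forall p, List.In p (lpaths t) ->
      exists f, F f /\ forall x y, List.In (x, y) p -> f x = y.

(* The OtD mapping.  X' = X + Y (inr y is the new point star_y);       *)
(* features Phi = {I[x'] : x' in X'} are indexed by X' itself.          *)
Definition indicator (X Y : Type) (phi : X + Y) (z : X + Y) : Prop := z = phi.

Definition OtD_ext (X Y : Type) (f : X -> Y) : X + Y -> Y :=
  fun z => match z with inl x => f x | inr y => y end.

Definition OtD_psi (X Y : Type) : X + Y -> X + Y -> option (X + Y) :=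
  fun x _ => Some x.

Definition OtD_class (X Y : Type) (F : (X -> Y) -> Prop)
  (l : X + Y -> Y) (psi : X + Y -> X + Y -> option (X + Y)) : Prop :=
  exists f, F f /\ l = OtD_ext f /\ psi = @OtD_psi X Y.

Definition OtD_H (X : Type) (Y : finType) : list ((X + Y) * Y) :=
  [seq (inr y, y) | y <- enum Y].

(* Main.v *)
Require Import Defs.
From mathcomp Require Import all_boot.
From Stdlib Require Import Classical.
From Stdlib Require List.

Lemma dedup_ex (A : Type) (l : list A) :
  exists l', List.NoDup l' /\ forall a, List.In a l' <-> List.In a l.
Proof.
elim: l => [|a l [l' [Hn Hm]]].
  by exists nil; split; [constructor | move=> a; split].
destruct (classic (List.In a l')) as [Hin|Hnin].
  exists l'; split => // b; split.
    by move=> /Hm Hb; right.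
  by case=> [<-|/Hm //].
exists (a :: l'); split; first by constructor.
move=> b; split; case=> [->|Hb]; first (by left); first (by right; apply/Hm).
  by left.
by right; apply/Hm.
Qed.

Lemma choose_children (A B : Type) (P : A -> B -> Prop) (ls : list A) :
  (forall a, exists b, P a b) ->
  exists ch : list (A * B), map fst ch = ls /\ forall a b, List.In (a, b) ch -> P a b.
Proof.
move=> HP; elim: ls => [|a ls [ch [Hm Hc]]]; first by exists nil.
have [b Hb] := HP a.
exists ((a, b) :: ch); split; first by rewrite /= Hm.
by move=> a' b' [[<- <-]|/Hc].
Qed.

Lemma in_In (T : eqType) (s : seq T) x : x \in s -> List.In x s.
Proof.
elim: s => [//|a s IH]; rewrite inE => /orP [/eqP ->|/IH]; [left | right] => //.
Qed.

Lemma build (X : Type) (Y : finType) (F : (X -> Y) -> Prop) (t : ltree X Y) :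
  forall m, lcomplete t m ->
  forall pre : list (X * Y),
  (forall p, List.In p (lpaths t) -> exists f, F f /\
      forall x y, List.In (x, y) (pre ++ p) -> f x = y) ->
  forall ex yo phio, exists c : dtree (X + Y) Y (X + Y),
    dy c = yo /\ dphi c = phio /\ dff_ok (OtD_H X Y) ex c /\
    forall p, dpath c p -> size p = m /\ exists f, F f /\
      (forall x y, List.In (x, y) pre -> f x = y) /\
      path_consistent (OtD_ext f) (@OtD_psi X Y) p.
Proof.
elim: t => [|x y0 y1 l IHl r IHr] [|k] //= Hc pre Hpre ex yo phio.
- exists (DNode yo phio None nil); split => //; split => //; split.
    by constructor => //.
  move=> p Hp; inversion Hp; subst; split => //.
  have [f [Ff Hf]] := Hpre nil (or_introl erefl).
  exists f; split => //; split => // x y Hxy; apply: Hf; rewrite cats0 //.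
- case: Hc => Hneq [Hl Hr].
  have Hl' := IHl k Hl (pre ++ [:: (x, y0)]).
  have Hr' := IHr k Hr (pre ++ [:: (x, y1)]).
  have Hlp : forall p, List.In p (lpaths l) -> exists f, F f /\
      forall x' y', List.In (x', y') ((pre ++ [:: (x, y0)]) ++ p) -> f x' = y'.
    move=> p Hp; have [f [Ff Hf]] := Hpre ((x, y0) :: p)
      (List.in_or_app _ _ _ (or_introl (List.in_map _ _ _ Hp))).
    by exists f; split => // x' y'; rewrite -catA; apply: Hf.
  have Hrp : forall p, List.In p (lpaths r) -> exists f, F f /\
      forall x' y', List.In (x', y') ((pre ++ [:: (x, y1)]) ++ p) -> f x' = y'.
    move=> p Hp; have [f [Ff Hf]] := Hpre ((x, y1) :: p)
      (List.in_or_app _ _ _ (or_intror (List.in_map _ _ _ Hp))).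
    by exists f; split => // x' y'; rewrite -catA; apply: Hf.
  have [ls [Hnd Hls]] := @dedup_ex _ (OtD_H X Y ++ ex).
  pose Pc (lab : (X + Y) * Y) (c : dtree (X + Y) Y (X + Y)) :=
    exists yi, yi <> lab.2 /\ List.In (x, yi) [:: (x, y0); (x, y1)] /\
    dy c = Some yi /\ dphi c = Some (inl x) /\
    dff_ok (OtD_H X Y) (ex ++ [:: (inl x, yi)]) c /\
    forall p, dpath c p -> size p = k /\ exists f, F f /\
      (forall x' y', List.In (x', y') (pre ++ [:: (x, yi)]) -> f x' = y') /\
      path_consistent (OtD_ext f) (@OtD_psi X Y) p.
  have [ch [Hch Hcc]] : exists ch, map fst ch = ls /\
      forall a b, List.In (a, b) ch -> Pc a b.
    apply: (@choose_children _ _ Pc) => lab.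
    case E: (lab.2 == y0).
      have [c [H1 [H2 [H3 H4]]]] := Hr' Hrp (ex ++ [:: (inl x, y1)]) (Some y1) (Some (inl x)).
      exists c, y1; split; first by move/eqP: E => ->; apply: nesym.
      by split; [right; left | do 4 (split => //)].
    have [c [H1 [H2 [H3 H4]]]] := Hl' Hlp (ex ++ [:: (inl x, y0)]) (Some y0) (Some (inl x)).
    exists c, y0; split; first by move=> Heq; rewrite Heq eqxx in E.
    by split; [left | do 4 (split => //)].
  have Hne : ch <> nil.
    move=> Hnil; subst ch; move: (Hls (inr y0, y0)) => [_ /(_ _) H].
    have : List.In (inr y0, y0) ls.
      apply: H; apply: List.in_or_app; left; rewrite /OtD_H.
      by apply: (List.in_map (fun y => (inr y, y))); apply: in_In; rewrite mem_enum.
    by rewrite -Hch.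
  exists (DNode yo phio (Some (inl x)) ch); split => //; split => //; split.
    constructor; first by split => // Hn.
    move=> px [<-]; split; first by rewrite Hch.
    split.
      move=> p; rewrite Hch Hls; split; first by move=> Hq; apply: List.in_app_or.
      by move=> H; apply: List.in_or_app.
    move=> lab c Hin; have [yi [Hyi [_ [Hdy [Hdp [Hok _]]]]]] := Hcc _ _ Hin.
    by rewrite Hdy Hdp /=; split => //; split => //; move=> [E]; apply: Hyi.
  move=> p Hp; inversion Hp as [|? ? ? ? lab0 c0 p0 Hin0 Hdp0]; subst.
    by case: Hne.
  have [yi [_ [Hxi [Hdy [Hdp [_ Hpc]]]]]] := Hcc _ _ Hin0.
  have [Hs [f [Ff [Hf Hpcf]]]] := Hpc _ Hdp0.
  split; first by rewrite /= Hs.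
  exists f; split => //; split.
    by move=> x' y' Hx; apply: Hf; apply: List.in_or_app; left.
  move=> px' lab' yc phic [E|Hin'].
    case: E => <- <- <- <-; rewrite Hdy Hdp; split.
      by rewrite /= (Hf x yi) //; apply: List.in_or_app; right; left.
    by [].
  exact: Hpcf _ _ _ _ Hin'.
Qed.

Theorem mainTheorem9 (X : Type) (Y : finType) (F : (X -> Y) -> Prop) (n : nat) :
  Ldim_ge F n -> DFFdim_ge (OtD_class F) (OtD_H X Y) n.
Proof.
move=> [t [Hc Hp]].
have [c [H1 [H2 [H3 H4]]]] := @build X Y F t n Hc nil Hp nil None None.
exists c, n; split => //; split => //; split => //; split => //; split.
  move=> p Hpc; have [_ [f [Ff [_ Hf]]]] := H4 p Hpc.
  exists (OtD_ext f), (@OtD_psi X Y); split; first by exists f.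
  split => //.
  move=> x y; rewrite /OtD_H => /List.in_map_iff [y' [[<- <-] _]] //.
by move=> p Hpc; case: (H4 p Hpc).
Qed.
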